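(* Let $A$ be a Banach algebra and $n\ge 2$ such that $Mul_{n,l}(A,A^{*})$ is algebraically reflexive, and let $X$ be a right Banach $A$-module with $\{x\in X: x^{\perp}=A\}=\{0\}$. Then every approximately local left $n$-multiplier from $A$ into $X$ is a left $n$-multiplier.
   Context: $A^*$ is the dual of $A$, a right Banach $A$-module via $(f\cdot a)(b)=f(ab)$. A bounded linear map $T:A\to X$ is a left $n$-multiplier if $T(a_1\cdots a_n)=T(a_1\cdots a_{n-1})\cdot a_n$ for all $a_i\in A$; $Mul_{n,l}(A,X)$ is the set of these. $T$ is an approximately local left $n$-multiplier if for every $a\in A$ there is a sequence $(T_{a,m})_m$ in $Mul_{n,l}(A,X)$ with $T(a)=\lim_m T_{a,m}(a)$. For $S\subseteq B(A,Y)$, $\mathrm{ref}(S)=\{T\in B(A,Y): T(x)\in\overline{\{s(x):s\in S\}}\ \forall x\in A\}$; $S$ is algebraically reflexive if $\mathrm{ref}(S)\subseteq S$. For $x\in X$, $x^\perp=\{a\in A: x\cdot a=0\}$. *)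

(* Defs.v *)
From Stdlib Require Import Reals Lra.
Open Scope R_scope.
Set Implicit Arguments.

Record C := mkC { Cre : R; Cim : R }.
Definition C0 : C := mkC 0 0.
Definition C1 : C := mkC 1 0.
Definition Cadd (z w : C) : C := mkC (Cre z + Cre w) (Cim z + Cim w).
Definition Copp (z : C) : C := mkC (- Cre z) (- Cim z).
Definition Csub (z w : C) : C := Cadd z (Copp w).
Definition Cmul (z w : C) : C :=
  mkC (Cre z * Cre w - Cim z * Cim w) (Cre z * Cim w + Cim z * Cre w).
Definition Cabs (z : C) : R := sqrt (Cre z * Cre z + Cim z * Cim z).

Record NormedSpace := {
  ns_car :> Type;
  ns_zero : ns_car;
  ns_add : ns_car -> ns_car -> ns_car;
  ns_opp : ns_car -> ns_car;
  ns_scal : C -> ns_car -> ns_car;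
  ns_norm : ns_car -> R;
  ns_addA : forall x y z, ns_add x (ns_add y z) = ns_add (ns_add x y) z;
  ns_addC : forall x y, ns_add x y = ns_add y x;
  ns_add0 : forall x, ns_add ns_zero x = x;
  ns_addN : forall x, ns_add (ns_opp x) x = ns_zero;
  ns_scalA : forall c d x, ns_scal c (ns_scal d x) = ns_scal (Cmul c d) x;
  ns_scal1 : forall x, ns_scal C1 x = x;
  ns_scalDr : forall c x y, ns_scal c (ns_add x y) = ns_add (ns_scal c x) (ns_scal c y);
  ns_scalDl : forall c d x, ns_scal (Cadd c d) x = ns_add (ns_scal c x) (ns_scal d x);
  ns_norm_eq0 : forall x, ns_norm x = 0 -> x = ns_zero;
  ns_norm_triangle : forall x y, ns_norm (ns_add x y) <= ns_norm x + ns_norm y;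
  ns_norm_scal : forall c x, ns_norm (ns_scal c x) = Cabs c * ns_norm x
}.

Arguments ns_zero {_}.
Arguments ns_add {_}.
Arguments ns_opp {_}.
Arguments ns_scal {_}.
Arguments ns_norm {_}.

Definition ns_sub {V : NormedSpace} (x y : V) : V := ns_add x (ns_opp y).

Definition ns_lim {V : NormedSpace} (u : nat -> V) (l : V) : Prop :=
  forall eps, eps > 0 -> exists N, forall m, (m >= N)%nat -> ns_norm (ns_sub (u m) l) < eps.

Definition ns_complete (V : NormedSpace) : Prop :=
  forall u : nat -> V,
    (forall eps, eps > 0 -> exists N, forall p q, (p >= N)%nat -> (q >= N)%nat ->
        ns_norm (ns_sub (u p) (u q)) < eps) ->
    exists l, ns_lim u l.

Record BanachSpace := { bs_ns :> NormedSpace; bs_complete : ns_complete bs_ns }.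

Record BanachAlgebra := {
  ba_bs :> BanachSpace;
  ba_mul : ba_bs -> ba_bs -> ba_bs;
  ba_mulA : forall a b c, ba_mul a (ba_mul b c) = ba_mul (ba_mul a b) c;
  ba_mulDl : forall a b c, ba_mul (ns_add a b) c = ns_add (ba_mul a c) (ba_mul b c);
  ba_mulDr : forall a b c, ba_mul a (ns_add b c) = ns_add (ba_mul a b) (ba_mul a c);
  ba_scal_mull : forall k a b, ba_mul (ns_scal k a) b = ns_scal k (ba_mul a b);
  ba_scal_mulr : forall k a b, ba_mul a (ns_scal k b) = ns_scal k (ba_mul a b);
  ba_norm_mul : forall a b, ns_norm (ba_mul a b) <= ns_norm a * ns_norm b
}.
Arguments ba_mul {_}.

Record RightBanachModule (A : BanachAlgebra) := {
  rm_bs :> BanachSpace;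
  rm_act : rm_bs -> A -> rm_bs;
  rm_actDl : forall x y a, rm_act (ns_add x y) a = ns_add (rm_act x a) (rm_act y a);
  rm_actDr : forall x a b, rm_act x (ns_add a b) = ns_add (rm_act x a) (rm_act x b);
  rm_act_scall : forall k x a, rm_act (ns_scal k x) a = ns_scal k (rm_act x a);
  rm_act_scalr : forall k x a, rm_act x (ns_scal k a) = ns_scal k (rm_act x a);
  rm_actA : forall x a b, rm_act (rm_act x a) b = rm_act x (ba_mul a b);
  rm_norm_act : forall x a, ns_norm (rm_act x a) <= ns_norm x * ns_norm a
}.
Arguments rm_act {_ _}.

Fixpoint prodA {A : BanachAlgebra} (f : nat -> A) (k : nat) : A :=
  match k with
  | O => f O
  | S k' => ba_mul (prodA f k') (f (S k'))
  end.
(* For n >= 1, a_1 ... a_n is  prodA f (n-1)  with a_i = f (i-1). *)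

Definition is_bounded_linear {A : BanachAlgebra} {V : NormedSpace} (T : A -> V) : Prop :=
  (forall a b, T (ns_add a b) = ns_add (T a) (T b)) /\
  (forall k a, T (ns_scal k a) = ns_scal k (T a)) /\
  (exists M, forall a, ns_norm (T a) <= M * ns_norm a).

Definition Mul_nl {A : BanachAlgebra} {X : RightBanachModule A} (n : nat) (T : A -> X) : Prop :=
  is_bounded_linear T /\
  forall f : nat -> A, T (prodA f (n - 1)) = rm_act (T (prodA f (n - 2))) (f (n - 1)%nat).

Definition approx_local_Mul_nl {A : BanachAlgebra} {X : RightBanachModule A} (n : nat)
  (T : A -> X) : Prop :=
  is_bounded_linear T /\
  forall a : A, exists Ta : nat -> (A -> X),
    (forall m, Mul_nl n (Ta m)) /\ ns_lim (fun m => Ta m a) (T a).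

(* An element of A^* is a bounded (complex) linear functional A -> C.
   A map T : A -> A^* is represented as T : A -> A -> C, with T a the functional. *)
Definition is_dual_elt {A : BanachAlgebra} (g : A -> C) : Prop :=
  (forall a b, g (ns_add a b) = Cadd (g a) (g b)) /\
  (forall k a, g (ns_scal k a) = Cmul k (g a)) /\
  (exists M, forall a, Cabs (g a) <= M * ns_norm a).

Definition is_bounded_linear_dual {A : BanachAlgebra} (T : A -> A -> C) : Prop :=
  (forall a, is_dual_elt (T a)) /\
  (forall a a' b, T (ns_add a a') b = Cadd (T a b) (T a' b)) /\
  (forall k a b, T (ns_scal k a) b = Cmul k (T a b)) /\
  (exists M, forall a b, Cabs (T a b) <= M * ns_norm a * ns_norm b).

Definition dual_act {A : BanachAlgebra} (g : A -> C) (a : A) : A -> C :=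
  fun b => g (ba_mul a b).

Definition Mul_nl_dual {A : BanachAlgebra} (n : nat) (T : A -> A -> C) : Prop :=
  is_bounded_linear_dual T /\
  forall (f : nat -> A) (b : A),
    T (prodA f (n - 1)) b = dual_act (T (prodA f (n - 2))) (f (n - 1)%nat) b.

(* ref(Mul_{n,l}(A,A^* )): T in B(A,A^* ) such that T(x) lies in the norm closure
   (dual norm) of { s(x) : s in Mul_{n,l}(A,A^* ) } for all x.
   Dual norm ||g||_* <= eps  iff  forall b, |g b| <= eps ||b||. *)
Definition ref_Mul_nl_dual {A : BanachAlgebra} (n : nat) (T : A -> A -> C) : Prop :=
  is_bounded_linear_dual T /\
  forall x : A, forall eps, eps > 0 ->
    exists s, Mul_nl_dual n s /\
      forall b, Cabs (Csub (T x b) (s x b)) <= eps * ns_norm b.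

Definition Mul_nl_dual_alg_reflexive (A : BanachAlgebra) (n : nat) : Prop :=
  forall T : A -> A -> C, ref_Mul_nl_dual n T -> Mul_nl_dual n T.

(* Main.v *)
From Stdlib Require Import Reals Lra Lia Classical ClassicalEpsilon.
Require Import Defs.
From mathcomp Require classical_sets.
Open Scope R_scope.


Lemma Ceq (z w : C) : Cre z = Cre w -> Cim z = Cim w -> z = w.
Proof. destruct z, w; simpl; intros; subst; reflexivity. Qed.

Section Grp.
Variable V : NormedSpace.
Local Notation "x +v y" := (ns_add x y) (at level 50, left associativity).
Local Notation "0v" := (@ns_zero V).

Lemma addr0 (x : V) : x +v 0v = x.
Proof. rewrite ns_addC; apply ns_add0. Qed.
Lemma addNr' (x : V) : x +v ns_opp x = 0v.
Proof. rewrite ns_addC; apply ns_addN. Qed.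
Lemma add_cancel_l (z x y : V) : z +v x = z +v y -> x = y.
Proof. intro H. rewrite <- (ns_add0 V x), <- (ns_add0 V y), <- (ns_addN V z), <- !ns_addA, H; reflexivity. Qed.
Lemma addACA (a b c d : V) : (a +v b) +v (c +v d) = (a +v c) +v (b +v d).
Proof. rewrite <- !ns_addA. f_equal. rewrite !ns_addA. f_equal. apply ns_addC. Qed.
Lemma add_cancel_r (z x y : V) : x +v z = y +v z -> x = y.
Proof. rewrite (ns_addC V x), (ns_addC V y). apply add_cancel_l. Qed.
Lemma diff_eq (x w x' w' : V) : x +v w = x' +v w' -> w +v ns_opp w' = x' +v ns_opp x.
Proof. intro H. apply (add_cancel_l (x +v w')).
  rewrite addACA, addNr', addr0, H.
  rewrite (ns_addC V x w'), addACA, addNr', addr0. apply ns_addC. Qed.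
Lemma opp_unique (x y : V) : x +v y = 0v -> y = ns_opp x.
Proof. intro H. apply (add_cancel_l x). rewrite H, addNr'. reflexivity. Qed.
Lemma opp_opp (x : V) : ns_opp (ns_opp x) = x.
Proof. symmetry. apply opp_unique. apply ns_addN. Qed.
Lemma opp_add (x y : V) : ns_opp (x +v y) = ns_opp x +v ns_opp y.
Proof. symmetry. apply opp_unique. rewrite addACA, !addNr'. apply addr0. Qed.
Lemma sub_add (u v : V) : ns_sub u v +v v = u.
Proof. unfold ns_sub. rewrite <- ns_addA, ns_addN. apply addr0. Qed.
Lemma sub_sym (u v : V) : ns_sub u v = ns_opp (ns_sub v u).
Proof. unfold ns_sub. rewrite opp_add, opp_opp. apply ns_addC. Qed.
Lemma self_zero (x : V) : x = x +v x -> x = 0v.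
Proof. intro H. apply (add_cancel_l x). rewrite addr0. symmetry; exact H. Qed.
Lemma scal0 (x : V) : ns_scal C0 x = 0v.
Proof. apply self_zero. rewrite <- ns_scalDl. f_equal. apply Ceq; simpl; lra. Qed.
Lemma scal_zero c : ns_scal c 0v = 0v.
Proof. apply self_zero. rewrite <- ns_scalDr. rewrite ns_add0. reflexivity. Qed.
Lemma opp_scal (x : V) : ns_opp x = ns_scal (mkC (-1) 0) x.
Proof. symmetry; apply opp_unique. rewrite <- (ns_scal1 V x) at 1. rewrite <- ns_scalDl.
  rewrite <- (scal0 x). f_equal. apply Ceq; simpl; lra. Qed.

Lemma Cabs_real r : Cabs (mkC r 0) = Rabs r.
Proof. unfold Cabs; simpl. replace (r*r+0*0) with (Rsqr r) by (unfold Rsqr; ring). apply sqrt_Rsqr_abs. Qed.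
Lemma norm0 : ns_norm 0v = 0%R.
Proof. rewrite <- (scal0 0v), ns_norm_scal. unfold Cabs; simpl. replace (0*0+0*0) with 0%R by ring. rewrite sqrt_0; ring. Qed.
Lemma norm_opp (x : V) : ns_norm (ns_opp x) = ns_norm x.
Proof. rewrite opp_scal, ns_norm_scal, Cabs_real. replace (Rabs (-1)) with 1 by (rewrite Rabs_left; lra). ring. Qed.
Lemma norm_ge0 (x : V) : 0%R <= ns_norm x.
Proof. pose proof (ns_norm_triangle V x (ns_opp x)). rewrite addNr', norm0, norm_opp in H. lra. Qed.
Lemma norm_gt0 (x : V) : x <> 0v -> 0%R < ns_norm x.
Proof. intro H. destruct (norm_ge0 x) as [h|h]; auto. exfalso; apply H, ns_norm_eq0; auto. Qed.

Definition rs (r : R) (x : V) : V := ns_scal (mkC r 0) x.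
Lemma rs_mul r s x : rs r (rs s x) = rs (r*s) x.
Proof. unfold rs. rewrite ns_scalA. f_equal. apply Ceq; simpl; ring. Qed.
Lemma rs_add r s x : rs (r+s) x = rs r x +v rs s x.
Proof. unfold rs. rewrite <- ns_scalDl. f_equal. apply Ceq; simpl; ring. Qed.
Lemma rs_addv r x y : rs r (x +v y) = rs r x +v rs r y.
Proof. apply ns_scalDr. Qed.
Lemma rs1 x : rs 1 x = x.
Proof. unfold rs. rewrite <- (ns_scal1 V x) at 2. reflexivity. Qed.
Lemma rs0 x : rs 0 x = 0v.
Proof. apply scal0. Qed.
Lemma rs_zero r : rs r 0v = 0v.
Proof. apply scal_zero. Qed.
Lemma rs_opp x : ns_opp x = rs (-1) x.
Proof. apply opp_scal. Qed.
Lemma norm_rs r x : ns_norm (rs r x) = Rabs r * ns_norm x.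
Proof. unfold rs. rewrite ns_norm_scal, Cabs_real. reflexivity. Qed.

End Grp.
Arguments rs {V}.


Section HB.
Variable V : NormedSpace.
Local Notation "x +v y" := (ns_add x y) (at level 50, left associativity).
Local Notation "0v" := (@ns_zero V).
Variable y : V.
Hypothesis hy : y <> 0v.

Definition props (G : V*R -> Prop) :=
  (forall x a b, G (x,a) -> G (x,b) -> a = b) /\
  (forall x1 x2 a1 a2, G (x1,a1) -> G (x2,a2) -> G (x1 +v x2, a1+a2)) /\
  (forall x a r, G (x,a) -> G (rs r x, r*a)) /\
  (forall x a, G (x,a) -> a <= ns_norm x).

Definition B0 (p : V*R) := exists r, fst p = rs r y /\ snd p = r * ns_norm y.
Definition PP (G : V*R -> Prop) := props G /\ (forall p, G p -> forall q, B0 q -> G q).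

Lemma rs_inj_y r s : rs r y = rs s y -> r = s.
Proof.
  intro H. destruct (Req_dec (r - s) 0) as [h|h]; [lra|].
  exfalso. apply hy.
  assert (E : rs (r - s) y = 0v).
  { unfold Rminus. rewrite rs_add, H. replace (-s) with (-1*s) by ring. rewrite <- (rs_mul _ (-1) s y), <- rs_opp. apply addNr'. }
  rewrite <- (rs1 _ y), <- (Rinv_l (r - s)) by exact h.
  rewrite <- rs_mul, E. apply rs_zero.
Qed.

Lemma props_B0 : PP B0.
Proof.
  split; [repeat split|].
  - intros x a b [r [e1 e2]] [s [f1 f2]]; simpl in *. rewrite e2, f2.
    rewrite (rs_inj_y r s) by congruence. reflexivity.
  - intros x1 x2 a1 a2 [r [e1 e2]] [s [f1 f2]]; simpl in *; subst.
    exists (r+s); simpl; split; [rewrite rs_add; reflexivity| ring].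
  - intros x a t [r [e1 e2]]; simpl in *; subst. exists (t*r); simpl; split; [apply rs_mul| ring].
  - intros x a [r [e1 e2]]; simpl in *; subst. rewrite norm_rs.
    pose proof (norm_ge0 _ y). pose proof (Rle_abs r). nra.
  - intros p _ q Hq; exact Hq.
Qed.

Lemma chain_PP : forall F : classical_sets.set (classical_sets.set (V*R)),
  classical_sets.subset F PP ->
  classical_sets.total_on F classical_sets.subset ->
  PP (classical_sets.bigcup F (fun X => X)).
Proof.
  intros F HF Htot.
  unfold classical_sets.bigcup.
  split; [repeat split|].
  - intros x a b [X1 F1 H1] [X2 F2 H2].
    destruct (Htot X1 X2 F1 F2) as [S|S].
    + destruct (HF X2 F2) as [[P1 _] _]. apply (P1 x); auto.
    + destruct (HF X1 F1) as [[P1 _] _]. apply (P1 x); auto.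
  - intros x1 x2 a1 a2 [X1 F1 H1] [X2 F2 H2].
    destruct (Htot X1 X2 F1 F2) as [S|S].
    + exists X2; auto. destruct (HF X2 F2) as [[_ [P2 _]] _]. apply P2; auto.
    + exists X1; auto. destruct (HF X1 F1) as [[_ [P2 _]] _]. apply P2; auto.
  - intros x a r [X1 F1 H1]. exists X1; auto.
    destruct (HF X1 F1) as [[_ [_ [P3 _]]] _]. apply P3; auto.
  - intros x a [X1 F1 H1]. destruct (HF X1 F1) as [[_ [_ [_ P4]]] _]. apply P4; auto.
  - intros p [X1 F1 H1] q Hq. exists X1; auto.
    destruct (HF X1 F1) as [_ P5]. apply (P5 p); auto.
Qed.


Lemma extend (G : V*R -> Prop) (HG : props G) (HB : forall q, B0 q -> G q)
  (z : V) (hz : ~ exists a, G (z,a)) :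
  exists G', PP G' /\ (forall p, G p -> G' p) /\ exists c, G' (z,c).
Proof.
  destruct HG as [Hf [Ha [Hs Hd]]].
  assert (G00 : G (0v, 0)).
  { apply HB. exists 0; simpl; split; [symmetry; apply rs0| ring]. }
  assert (Key : forall u a v b, G (u,a) -> G (v,b) -> a - ns_norm (ns_sub u z) <= ns_norm (v +v z) - b).
  { intros u a v b Hu Hv. pose proof (Hd _ _ (Ha _ _ _ _ Hu Hv)).
    assert (E : u +v v = ns_sub u z +v (v +v z)).
    { unfold ns_sub. rewrite addACA, (ns_addN V z), addr0. reflexivity. }
    rewrite E in H. pose proof (ns_norm_triangle V (ns_sub u z) (v +v z)). lra. }
  pose (E := fun r => exists u a, G (u,a) /\ r = a - ns_norm (ns_sub u z)).
  destruct (completeness E) as [c [Hub Hlub]].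
  { exists (ns_norm (0v +v z) - 0). intros r [u [a [Hu ->]]]. apply Key; auto. }
  { exists (0 - ns_norm (ns_sub 0v z)). exists 0v, 0; auto. }
  assert (H1 : forall u a, G (u,a) -> a - ns_norm (ns_sub u z) <= c).
  { intros u a Hu. apply Hub. exists u, a; auto. }
  assert (H2 : forall v b, G (v,b) -> c <= ns_norm (v +v z) - b).
  { intros v b Hv. apply Hlub. intros r [u [a [Hu ->]]]. apply Key; auto. }
  clear Hub Hlub.
  pose (G' := fun p : V*R => exists x a t, G (x,a) /\ fst p = x +v rs t z /\ snd p = a + t*c).
  assert (Sub : forall p, G p -> G' p).
  { intros [w e] Hp. exists w, e, 0. split; auto. simpl. split.
    - rewrite rs0, addr0. reflexivity.
    - ring. }
  exists G'. split; [split; [repeat split|] | split].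
  - intros w e e' [x [a [t [Hx [e1 e2]]]]] [x' [a' [t' [Hx' [f1 f2]]]]]; simpl in *.
    assert (Tt : t = t').
    { destruct (Req_dec (t - t') 0) as [h|h]; [lra|]. exfalso. apply hz.
      assert (D := diff_eq _ x (rs t z) x' (rs t' z) ltac:(congruence)).
      rewrite rs_opp, rs_mul, <- rs_add in D.
      assert (Gd : G (x' +v ns_opp x, a' + -1*a)).
      { apply Ha; auto. rewrite rs_opp. apply Hs; auto. }
      exists (/(t-t') * (a' + -1*a)).
      replace z with (rs (/(t-t')) (x' +v ns_opp x)). { apply Hs; auto. }
      rewrite <- D, rs_mul. replace (/(t-t') * (t + -1*t')) with 1 by (field; auto). apply rs1. }
    subst t'. assert (x = x') by (apply (add_cancel_r _ (rs t z)); congruence). subst x'.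
    rewrite e2, f2, (Hf x a a'); auto.
  - intros w1 w2 e1 e2 [x1 [a1 [t1 [H1x [g1 h1]]]]] [x2 [a2 [t2 [H2x [g2 h2]]]]]; simpl in *.
    exists (x1 +v x2), (a1 + a2), (t1 + t2). split; [apply Ha; auto|]. simpl; split.
    + rewrite g1, g2, addACA, rs_add. reflexivity.
    + rewrite h1, h2. ring.
  - intros w e r [x [a [t [Hx [g h]]]]]; simpl in *.
    exists (rs r x), (r*a), (r*t). split; [apply Hs; auto|]. simpl; split.
    + rewrite g, rs_addv, rs_mul. reflexivity.
    + rewrite h. ring.
  - intros w e [x [a [t [Hx [g h]]]]]; simpl in *. rewrite g, h.
    destruct (Rtotal_order t 0) as [tn|[t0|tp]].
    + set (s := -t). assert (sp : 0 < s) by (unfold s; lra).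
      assert (Gu : G (rs (/s) x, /s*a)) by (apply Hs; auto).
      pose proof (H1 _ _ Gu) as Hc.
      assert (Ex : x +v rs t z = rs s (ns_sub (rs (/s) x) z)).
      { unfold ns_sub. rewrite rs_addv, rs_mul, rs_opp, rs_mul.
        replace (s * /s) with 1 by (field; lra). rewrite rs1. unfold s. f_equal. f_equal. ring. }
      rewrite Ex, norm_rs, Rabs_right by lra.
      assert (s * (/s*a - ns_norm (ns_sub (rs (/ s) x) z)) <= s * c) by (apply Rmult_le_compat_l; lra).
      replace (s * (/s*a - ns_norm (ns_sub (rs (/ s) x) z))) with (a - s * ns_norm (ns_sub (rs (/ s) x) z)) in H by (field; lra).
      unfold s in *. lra.
    + subst t. rewrite rs0, addr0. replace (a + 0*c) with a by ring. apply Hd; auto.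
    + assert (Gu : G (rs (/t) x, /t*a)) by (apply Hs; auto).
      pose proof (H2 _ _ Gu) as Hc.
      assert (Ex : x +v rs t z = rs t (rs (/t) x +v z)).
      { rewrite rs_addv, rs_mul. replace (t * /t) with 1 by (field; lra). rewrite rs1. reflexivity. }
      rewrite Ex, norm_rs, Rabs_right by lra.
      assert (t * c <= t * (ns_norm (rs (/ t) x +v z) - / t * a)) by (apply Rmult_le_compat_l; lra).
      replace (t * (ns_norm (rs (/ t) x +v z) - / t * a)) with (t * ns_norm (rs (/ t) x +v z) - a) in H by (field; lra).
      lra.
  - intros p _ q Hq. apply Sub, HB, Hq.
  - exact Sub.
  - exists c. exists 0v, 0, 1. split; auto. simpl. split.
    + rewrite rs1, ns_add0. reflexivity.
    + ring.
Qed.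


Lemma HB_real : exists phi : V -> R,
  (forall u v, phi (u +v v) = phi u + phi v) /\ (forall r u, phi (rs r u) = r * phi u) /\
  (forall u, phi u <= ns_norm u) /\ phi y = ns_norm y.
Proof.
  destruct (@classical_sets.Zorn_bigcup (V*R) PP chain_PP) as [A [PA Amax]].
  assert (BA : forall q, B0 q -> A q).
  { destruct (classic (exists p, A p)) as [[p Hp]|Hn].
    - exact (proj2 PA p Hp).
    - exfalso. apply (Amax B0); [|exact props_B0].
      unfold classical_sets.proper, classical_sets.subset. split.
      + intros t Ht; exfalso; apply Hn; eauto.
      + intro S. apply Hn. exists (y, ns_norm y). apply S. exists 1; simpl; split; [symmetry; apply rs1| ring]. }
  assert (Full : forall x, exists a, A (x,a)).
  { intro z. apply NNPP. intro hz.
    destruct (extend A (proj1 PA) BA z hz) as [G' [PG' [Sub [c Hc]]]].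
    apply (Amax G'); auto. unfold classical_sets.proper, classical_sets.subset. split; auto.
    intro S. apply hz. exists c. apply S, Hc. }
  destruct PA as [[Hf [Ha [Hs Hd]]] _].
  pose (phi := fun x => proj1_sig (constructive_indefinite_description _ (Full x))).
  assert (Hphi : forall x, A (x, phi x)).
  { intro x. unfold phi. destruct (constructive_indefinite_description _ (Full x)); simpl; auto. }
  exists phi. repeat split.
  - intros u v. apply (Hf (u +v v)); auto.
  - intros r u. apply (Hf (rs r u)); auto.
  - intro u. apply Hd; auto.
  - apply (Hf y); auto. apply BA. exists 1; simpl; split; [symmetry; apply rs1| ring].
Qed.

End HB.


Lemma Cabs_le (a b : R) : Cabs (mkC a b) <= Rabs a + Rabs b.
Proof.
  unfold Cabs; simpl.
  assert (ha : Rabs a * Rabs a = a * a) by (rewrite <- Rabs_mult; apply Rabs_right; nra).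
  assert (hb : Rabs b * Rabs b = b * b) by (rewrite <- Rabs_mult; apply Rabs_right; nra).
  pose proof (Rabs_pos a); pose proof (Rabs_pos b).
  rewrite <- (sqrt_square (Rabs a + Rabs b)) by lra.
  apply sqrt_le_1_alt. nra.
Qed.

Section HBC.
Variable V : NormedSpace.
Local Notation "x +v y" := (ns_add x y) (at level 50, left associativity).
Local Notation "0v" := (@ns_zero V).

Definition iu (u : V) : V := ns_scal (mkC 0 1) u.

Lemma scal_decomp p q (u : V) : ns_scal (mkC p q) u = rs p u +v rs q (iu u).
Proof.
  unfold rs, iu. rewrite ns_scalA, <- ns_scalDl. f_equal. apply Ceq; simpl; ring.
Qed.
Lemma iu_scal p q (u : V) : iu (ns_scal (mkC p q) u) = ns_scal (mkC (-q) p) u.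
Proof. unfold iu. rewrite ns_scalA. f_equal. apply Ceq; simpl; ring. Qed.

Lemma HB_complex (y : V) (hy : y <> 0v) : exists psi : V -> C,
  (forall u v, psi (u +v v) = Cadd (psi u) (psi v)) /\
  (forall k u, psi (ns_scal k u) = Cmul k (psi u)) /\
  (forall u, Cabs (psi u) <= 2 * ns_norm u) /\ psi y <> C0.
Proof.
  destruct (HB_real V y hy) as [phi [Pa [Ps [Pd Py]]]].
  assert (Phs : forall p q u, phi (ns_scal (mkC p q) u) = p * phi u + q * phi (iu u)).
  { intros. rewrite scal_decomp, Pa, !Ps. reflexivity. }
  assert (Pabs : forall u, Rabs (phi u) <= ns_norm u).
  { intro u. apply Rabs_le. split; [|apply Pd].
    pose proof (Pd (rs (-1) u)). rewrite Ps, <- rs_opp, norm_opp in H. lra. }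
  exists (fun u => mkC (phi u) (- phi (iu u))). repeat split.
  - intros u v. apply Ceq; simpl; [rewrite Pa; ring|]. unfold iu at 1. rewrite ns_scalDr, Pa. fold (iu u) (iu v). ring.
  - intros [p q] u. apply Ceq; simpl.
    + rewrite Phs. ring.
    + rewrite iu_scal, Phs. ring.
  - intro u. eapply Rle_trans; [apply Cabs_le|]. rewrite Rabs_Ropp.
    pose proof (Pabs u); pose proof (Pabs (iu u)).
    unfold iu in H0 at 2. rewrite ns_norm_scal in H0.
    replace (Cabs (mkC 0 1)) with 1 in H0 by (unfold Cabs; simpl; replace (0*0+1*1) with 1 by ring; rewrite sqrt_1; reflexivity).
    lra.
  - intro E. pose proof (norm_gt0 _ y hy). assert (Cre (mkC (phi y) (- phi (iu y))) = 0) by (rewrite E; reflexivity).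
    simpl in H0. lra.
Qed.
End HBC.


Section Main.
Variable A : BanachAlgebra.
Variable X : RightBanachModule A.
Variable psi : X -> C.
Hypothesis Padd : forall u v, psi (ns_add u v) = Cadd (psi u) (psi v).
Hypothesis Pscal : forall k u, psi (ns_scal k u) = Cmul k (psi u).
Hypothesis Pbd : forall u, Cabs (psi u) <= 2 * ns_norm u.

Definition SU (U : A -> X) : A -> A -> C := fun x c => psi (rm_act (U x) c).

Lemma SU_bl U : is_bounded_linear U -> is_bounded_linear_dual (SU U).
Proof.
  intros [Ua [Us [M UM]]]. unfold SU. repeat split.
  - intros a0 b. rewrite rm_actDr. apply Padd.
  - intros k a0. rewrite rm_act_scalr. apply Pscal.
  - exists (2 * ns_norm (U a)). intro c.
    eapply Rle_trans; [apply Pbd|]. pose proof (rm_norm_act X (U a) c). lra.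
  - intros a a' b. rewrite Ua, rm_actDl. apply Padd.
  - intros k a b. rewrite Us, rm_act_scall. apply Pscal.
  - exists (2 * M). intros a b.
    eapply Rle_trans; [apply Pbd|]. pose proof (rm_norm_act X (U a) b).
    pose proof (UM a). pose proof (norm_ge0 _ b).
    assert (ns_norm (U a) * ns_norm b <= M * ns_norm a * ns_norm b) by (apply Rmult_le_compat_r; lra).
    lra.
Qed.

Lemma SU_mul n U : Mul_nl n U -> Mul_nl_dual n (SU U).
Proof.
  intros [Ubl Um]. split; [apply SU_bl; auto|].
  intros f b. unfold SU, dual_act. rewrite Um, rm_actA. reflexivity.
Qed.
End Main.

Theorem theorem3p3 (A : BanachAlgebra) (n : nat) (hn : (2 <= n)%nat)
  (hrefl : Mul_nl_dual_alg_reflexive A n)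
  (X : RightBanachModule A)
  (hX : forall x : X, (forall a : A, rm_act x a = ns_zero) -> x = ns_zero)
  (T : A -> X) (hT : approx_local_Mul_nl n T) :
  Mul_nl n T.
Proof.
  destruct hT as [HTbl HTloc]. split; [exact HTbl|]. intro f.
  set (p := prodA f (n-1)). set (q := prodA f (n-2)). set (a := f (n-1)%nat).
  set (d := ns_sub (T p) (rm_act (T q) a)).
  assert (Hd : d = ns_zero).
  { apply hX. intro b. apply NNPP. intro Hne.
    destruct (HB_complex X _ Hne) as [psi [Padd [Pscal [Pbd Pne]]]].
    assert (Href : ref_Mul_nl_dual n (SU A X psi T)).
    { split; [apply SU_bl; auto|]. intros x eps Heps.
      destruct (HTloc x) as [Ta [HTm Hlim]].
      destruct (Hlim (eps/2)) as [N HN]; [lra|].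
      pose proof (HN N (le_n N)) as HNN.
      exists (SU A X psi (Ta N)). split; [apply SU_mul; auto|].
      intro c. unfold SU.
      set (e := ns_sub (T x) (Ta N x)).
      assert (E : T x = ns_add e (Ta N x)) by (symmetry; apply sub_add).
      rewrite E at 1. rewrite rm_actDl, Padd.
      replace (Csub (Cadd (psi (rm_act e c)) (psi (rm_act (Ta N x) c))) (psi (rm_act (Ta N x) c)))
        with (psi (rm_act e c)) by (apply Ceq; simpl; ring).
      eapply Rle_trans; [apply Pbd|].
      pose proof (rm_norm_act X e c).
      assert (ne : ns_norm e = ns_norm (ns_sub (Ta N x) (T x))) by (unfold e; rewrite sub_sym, norm_opp; reflexivity).
      pose proof (norm_ge0 _ c).
      assert (2 * ns_norm e * ns_norm c <= eps * ns_norm c) by (apply Rmult_le_compat_r; lra).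
      lra. }
    destruct (hrefl _ Href) as [_ Hm].
    specialize (Hm f b). unfold SU, dual_act in Hm. fold p q a in Hm.
    rewrite <- rm_actA in Hm.
    assert (E : T p = ns_add d (rm_act (T q) a)) by (symmetry; apply sub_add).
    rewrite E, rm_actDl, Padd in Hm.
    apply Pne. destruct (psi (rm_act d b)) as [r1 i1] eqn:Q1.
    destruct (psi (rm_act (rm_act (T q) a) b)) as [r2 i2].
    injection Hm; intros. apply Ceq; simpl; lra. }
  assert (E : T p = ns_add d (rm_act (T q) a)) by (symmetry; apply sub_add).
  rewrite E, Hd, ns_add0. reflexivity.
Qed.
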